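(* Let $\mathcal{G}$ be a GBS graph of groups, $w=a_0^{k_0}y_1a_1^{k_1}\cdots y_na_n^{k_n}$ a $\mathcal{G}$-factorization, and $\sim_{\mathcal{C}}$ the relation on $\{1,\dots,n\}$ defined by: $i\sim_{\mathcal{C}}j$ iff $y_i=\bar y_j$ and (if $i<j$) $\rho(w_{i,j-1})=0$ and $k_{i,j-1}\in\beta_{y_i}\mathbb{Z}$, resp. (if $j<i$) $\rho(w_{j,i-1})=0$ and $k_{j,i-1}\in\beta_{y_j}\mathbb{Z}$. Define $i\approx j$ iff $i=j$ or there exists $\ell$ with $i\sim_{\mathcal{C}}\ell$ and $\ell\sim_{\mathcal{C}}j$. Then $\approx$ is an equivalence relation on $\{1,\dots,n\}$.
   Context: $\mathcal{G}$ consists of a finite connected graph $Y$ (vertices $V(Y)$, edges $E(Y)$, maps $\iota,\tau:E(Y)\to V(Y)$, fixed-point-free involution $y\mapsto\bar y$ with $\iota(\bar y)=\tau(y)$) and integers $\alpha_y,\beta_y\in\mathbb{Z}\setminus\{0\}$ with $\alpha_y=\beta_{\bar y}$. A $\mathcal{G}$-factorization is a word $a_0^{k_0}y_1a_1^{k_1}\cdots y_na_n^{k_n}$ with $\iota(y_i)=a_{i-1}$, $\tau(y_i)=a_i$, $a_n=a_0$, $k_i\in\mathbb{Z}$. For $0\le i\le j\le n$: $w_{i,j}=a_i^{k_i}y_{i+1}\cdots y_ja_j^{k_j}$ and $k_{i,j}=\sum_{\nu=i}^{j}k_\nu\prod_{\mu=i+1}^{\nu}\alpha_{y_\mu}/\beta_{y_\mu}\in\mathbb{Q}$.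 Fix an orientation $D\subseteq E(Y)$ (one of $y,\bar y$ for each edge); $\rho$ maps words additively to $\mathbb{Z}^D$ with $\rho(a^k)=0$, $\rho(y)=e_y$, $\rho(\bar y)=-e_y$ for $y\in D$. *)

(* Defs.v *)
From HB Require Import structures.
From mathcomp Require Import all_boot all_order all_algebra.
Set Implicit Arguments. Unset Strict Implicit. Unset Printing Implicit Defensive.
Import Order.TTheory GRing.Theory Num.Theory.
Local Open Scope ring_scope.

Record GBS := {
  V : finType;
  E : finType;
  iota : E -> V;
  tau : E -> V;
  bar : E -> E;
  alpha : E -> int;
  beta : E -> int;
  bar_inv : forall y, bar (bar y) = y;
  bar_nofix : forall y, bar y != y;
  iota_bar : forall y, iota (bar y) = tau y;
  connected : forall u v : V,
    connect (fun u v => [exists e, (iota e == u) && (tau e == v)]) u v;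
  alpha_nz : forall y, alpha y != 0;
  beta_nz : forall y, beta y != 0;
  alpha_beta_bar : forall y, alpha y = beta (bar y)
}.

Definition orientation (G : GBS) (D : {pred E G}) : Prop :=
  forall y : E G, (y \in D) != (bar y \in D).

(* A G-factorization a_0^{k_0} y_1 a_1^{k_1} ... y_n a_n^{k_n}, encoded by
   a : nat -> V (indices 0..n), y : nat -> E (indices 1..n),
   k : nat -> int (indices 0..n). *)
Definition factorization (G : GBS) (n : nat) (a : nat -> V G)
    (y : nat -> E G) : Prop :=
  (forall i, (1 <= i <= n)%N -> iota (y i) = a i.-1 /\ tau (y i) = a i)
  /\ a n = a 0%N.

(* rho(w_{i,j}) in Z^D (coordinates outside D set to 0): for d in D, the
   number of occurrences of d minus that of bar d among y_{i+1},...,y_j. *)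
Definition rho_w (G : GBS) (D : {pred E G}) (y : nat -> E G) (i j : nat)
  : {ffun E G -> int} :=
  [ffun d => if d \in D then
      \sum_(i.+1 <= m < j.+1) ((y m == d)%:Z - (y m == bar d)%:Z)
    else 0].

Definition kq (G : GBS) (y : nat -> E G) (k : nat -> int) (i j : nat) : rat :=
  \sum_(i <= nu < j.+1)
     ((k nu)%:~R * \prod_(i.+1 <= mu < nu.+1)
                    ((alpha (y mu))%:~R / (beta (y mu))%:~R)).

Definition in_multZ (q : rat) (b : int) : Prop := exists z : int, q = (b * z)%:~R.

Definition simC (G : GBS) (D : {pred E G}) (y : nat -> E G) (k : nat -> int)
    (i j : nat) : Prop :=
  y i = bar (y j) /\
  (((i < j)%N /\ rho_w D y i j.-1 = 0 /\ in_multZ (kq y k i j.-1) (beta (y i)))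
   \/
   ((j < i)%N /\ rho_w D y j i.-1 = 0 /\ in_multZ (kq y k j i.-1) (beta (y j)))).

Definition approxC (G : GBS) (D : {pred E G}) (n : nat) (y : nat -> E G)
    (k : nat -> int) (i j : nat) : Prop :=
  i = j \/ exists l, (1 <= l <= n)%N /\ simC D y k i l /\ simC D y k l j.

(* Main.v *)
Require Import Defs.
From mathcomp Require Import all_boot all_order all_algebra.
From mathcomp Require Import ring lra.
Set Implicit Arguments. Unset Strict Implicit. Unset Printing Implicit Defensive.
Import Order.TTheory GRing.Theory Num.Theory.
Local Open Scope ring_scope.


Definition rr (G : GBS) (e : E G) : rat := (alpha e)%:~R / (beta e)%:~R.
Definition Pseg (G : GBS) (y : nat -> E G) (i j : nat) : rat :=
  \prod_(i.+1 <= mu < j.+1) rr (y mu).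
Definition Xs (G : GBS) (y : nat -> E G) (k : nat -> int) (p : nat) : rat :=
  \sum_(0 <= nu < p) (k nu)%:~R * Pseg y 0 nu.
Definition delta (G : GBS) (D : {pred E G}) (e : E G) : {ffun E G -> int} :=
  [ffun d => if d \in D then (e == d)%:Z - (e == bar d)%:Z else 0].
Definition Fv (G : GBS) (D : {pred E G}) (v : {ffun E G -> int}) : rat :=
  \prod_(d | d \in D) rr d ^ (v d).

Lemma rr_nz (G : GBS) (e : E G) : rr e != 0.
Proof. by rewrite /rr mulf_neq0 ?invr_eq0 ?intr_eq0 ?alpha_nz ?beta_nz. Qed.

Lemma rr_bar (G : GBS) (e : E G) : rr (bar e) = (rr e)^-1.
Proof.
rewrite /rr alpha_beta_bar bar_inv -alpha_beta_bar invfM invrK mulrC //.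
Qed.

Lemma bar_eq (G : GBS) (e d : E G) : (bar e == bar d) = (e == d).
Proof.
apply/eqP/eqP => [h|->//]; by rewrite -(bar_inv e) h bar_inv.
Qed.

Lemma bar_eqL (G : GBS) (e d : E G) : (bar e == d) = (e == bar d).
Proof. by rewrite -bar_eq bar_inv. Qed.

Lemma delta_bar (G : GBS) (D : {pred E G}) (e : E G) :
  delta D (bar e) = - delta D e.
Proof.
apply/ffunP => d; rewrite !ffunE bar_eq bar_eqL; case: (d \in D) => //.
by rewrite opprB.
Qed.

Lemma Fv_add (G : GBS) (D : {pred E G}) v w : Fv D (v + w) = Fv D v * Fv D w.
Proof.
rewrite /Fv -big_split /=; apply: eq_bigr => d _.
by rewrite ffunE expfzDr ?rr_nz.
Qed.

Lemma Fv0 (G : GBS) (D : {pred E G}) : Fv D 0 = 1.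
Proof. by rewrite /Fv big1 // => d _; rewrite ffunE expr0z. Qed.

Lemma Fv_delta (G : GBS) (D : {pred E G}) (hD : orientation D) e :
  Fv D (delta D e) = rr e.
Proof.
rewrite /Fv.
have hb := hD e.
case eD: (e \in D) hb => hb.
- rewrite (bigD1 e) //= big1 ?mulr1.
  + have ne : (e == bar e) = false by rewrite eq_sym (negbTE (bar_nofix e)).
    by rewrite ffunE eD eqxx ne expr1z.
  + move=> d /andP [dD de]; rewrite ffunE dD eq_sym (negbTE de).
    case: eqP => [ed|]; last by rewrite expr0z.
    by move: hb; rewrite ed bar_inv dD.
- have bD : bar e \in D by move: hb; case: (bar e \in D).
  rewrite (bigD1 (bar e)) //= big1 ?mulr1.
  + have ne : (e == bar e) = false by rewrite eq_sym (negbTE (bar_nofix e)).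
    rewrite ffunE bD bar_inv eqxx ne /=.
    by rewrite rr_bar sub0r exprz_inv opprK expr1z.
  + move=> d /andP [dD de]; rewrite ffunE dD.
    case: eqP => [ed|_]; first by move: dD; rewrite -ed eD.
    case: eqP => [ed|_]; first by move: de; rewrite ed bar_inv eqxx.
    by rewrite expr0z.
Qed.
Lemma Pseg_cat (G : GBS) (y : nat -> E G) i m j : (i <= m)%N -> (m <= j)%N ->
  Pseg y i j = Pseg y i m * Pseg y m j.
Proof. by move=> h1 h2; rewrite /Pseg -big_cat_nat. Qed.

Lemma Pseg_id (G : GBS) (y : nat -> E G) i : Pseg y i i = 1.
Proof. by rewrite /Pseg big_geq. Qed.

Lemma Pseg_S (G : GBS) (y : nat -> E G) i j : (i <= j)%N ->
  Pseg y i j.+1 = Pseg y i j * rr (y j.+1).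
Proof. by move=> h; rewrite /Pseg big_nat_recr. Qed.

Lemma Pseg_nz (G : GBS) (y : nat -> E G) i j : Pseg y i j != 0.
Proof. by rewrite /Pseg prodf_seq_neq0; apply/allP => mu _; apply: rr_nz. Qed.

Lemma rho_cat (G : GBS) (D : {pred E G}) (y : nat -> E G) i j : (i <= j)%N ->
  rho_w D y i j = rho_w D y 0 j - rho_w D y 0 i.
Proof.
move=> h; apply/ffunP => d; rewrite !ffunE; case: (d \in D); last by rewrite subr0.
by rewrite [in RHS](big_cat_nat _ (n := i.+1)) //=; ring.
Qed.

Lemma rho_S (G : GBS) (D : {pred E G}) (y : nat -> E G) i j : (i <= j)%N ->
  rho_w D y i j.+1 = rho_w D y i j + delta D (y j.+1).
Proof.
move=> h; apply/ffunP => d; rewrite !ffunE; case: (d \in D); last by rewrite addr0.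
by rewrite big_nat_recr.
Qed.

Lemma rho_id (G : GBS) (D : {pred E G}) (y : nat -> E G) i : rho_w D y i i = 0.
Proof. by apply/ffunP => d; rewrite !ffunE big_geq //; case: (d \in D). Qed.

Lemma Pseg_Fv (G : GBS) (D : {pred E G}) (hD : orientation D) (y : nat -> E G) i j :
  (i <= j)%N -> Pseg y i j = Fv D (rho_w D y i j).
Proof.
move=> /subnKC <-; elim: (j - i)%N => [|d IH].
  by rewrite addn0 Pseg_id rho_id Fv0.
by rewrite addnS Pseg_S ?leq_addr // rho_S ?leq_addr // Fv_add IH Fv_delta.
Qed.

Lemma kq_X (G : GBS) (y : nat -> E G) (k : nat -> int) i j : (i <= j)%N ->
  kq y k i j * Pseg y 0 i = Xs y k j.+1 - Xs y k i.
Proof.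
move=> h; rewrite /Xs [X in X - _](big_cat_nat _ (n := i) (p := j.+1)) //=; last by rewrite ltnW.
rewrite [_ + _ - _]addrAC subrr add0r /kq mulr_suml; apply: eq_big_nat => nu /andP [h1 h2].
change (\prod_(i.+1 <= mu < nu.+1) _) with (Pseg y i nu).
rewrite (Pseg_cat y (i := 0) (m := i) (j := nu)) //; ring.
Qed.
Definition Mrel (G : GBS) (D : {pred E G}) (y : nat -> E G) (k : nat -> int) (i l : nat) :=
  [/\ y i = bar (y l), rho_w D y 0 i = rho_w D y 0 l.-1,
      rho_w D y 0 i.-1 = rho_w D y 0 l,
      Pseg y 0 i = Pseg y 0 l.-1 /\ Pseg y 0 i.-1 = Pseg y 0 l &
      in_multZ (Xs y k l / Pseg y 0 l.-1 - Xs y k i / Pseg y 0 i) (beta (y i))].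

Lemma R_S (G : GBS) (D : {pred E G}) (y : nat -> E G) p : (0 < p)%N ->
  rho_w D y 0 p = rho_w D y 0 p.-1 + delta D (y p).
Proof. by case: p => // p _; rewrite rho_S. Qed.

Lemma Pi_S (G : GBS) (y : nat -> E G) p : (0 < p)%N ->
  Pseg y 0 p = Pseg y 0 p.-1 * rr (y p).
Proof. by case: p => // p _; rewrite Pseg_S. Qed.

Lemma multZ_add q1 q2 b : in_multZ q1 b -> in_multZ q2 b -> in_multZ (q1 + q2) b.
Proof.
move=> [z1 ->] [z2 ->]; exists (z1 + z2); by rewrite mulrDr rmorphD.
Qed.

Lemma lemA (G : GBS) (D : {pred E G}) (hD : orientation D) (y : nat -> E G)
  (k : nat -> int) i l : (0 < i)%N -> (i < l)%N ->
  y i = bar (y l) -> rho_w D y i l.-1 = 0 -> in_multZ (kq y k i l.-1) (beta (y i)) ->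
  Mrel D y k i l.
Proof.
move=> i0 il yil rho0 hk.
have il1 : (i <= l.-1)%N by rewrite -ltnS prednK // (leq_ltn_trans _ il).
have l0 : (0 < l)%N by apply: leq_ltn_trans il.
have Ril : rho_w D y 0 i = rho_w D y 0 l.-1.
  by move: rho0; rewrite rho_cat // => /eqP; rewrite subr_eq0 => /eqP.
have Pil : Pseg y 0 i = Pseg y 0 l.-1.
  by rewrite (Pseg_cat y (i := 0) (m := i) (j := l.-1)) // (Pseg_Fv hD y il1) rho0 Fv0 mulr1.
have Pil2 : Pseg y 0 i.-1 = Pseg y 0 l.
  rewrite (Pi_S y l0) -Pil (Pi_S y i0) yil rr_bar -mulrA mulVf ?mulr1 //.
  exact: rr_nz.
split => //.
- by rewrite (R_S D y l0) -Ril (R_S D y i0) yil delta_bar subrK.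
- have := kq_X y k il1; rewrite prednK // => hX.
  suff -> : Xs y k l / Pseg y 0 l.-1 - Xs y k i / Pseg y 0 i = kq y k i l.-1 by [].
  rewrite -Pil -mulrBl -hX mulfK //; exact: Pseg_nz.
Qed.

Lemma lemB (G : GBS) (D : {pred E G}) (y : nat -> E G)
  (k : nat -> int) i l : (0 < i)%N -> (i < l)%N -> Mrel D y k i l ->
  [/\ y i = bar (y l), rho_w D y i l.-1 = 0 & in_multZ (kq y k i l.-1) (beta (y i))].
Proof.
move=> i0 il [yil Ril Ril2 [Pil Pil2] hk].
have il1 : (i <= l.-1)%N by rewrite -ltnS prednK // (leq_ltn_trans _ il).
have l0 : (0 < l)%N by apply: leq_ltn_trans il.
split => //; first by rewrite rho_cat // Ril subrr.
have := kq_X y k il1; rewrite prednK // => hX.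
suff <- : Xs y k l / Pseg y 0 l.-1 - Xs y k i / Pseg y 0 i = kq y k i l.-1 by [].
rewrite -Pil -mulrBl -hX mulfK //; exact: Pseg_nz.
Qed.

Lemma Msym (G : GBS) (D : {pred E G}) (y : nat -> E G)
  (k : nat -> int) i l : (0 < i)%N -> (0 < l)%N -> Mrel D y k i l -> Mrel D y k l i.
Proof.
move=> i0 l0 [yil Ril Ril2 [Pil Pil2] [z hz]].
split => //; first by rewrite yil bar_inv.
exists (- z).
have ha : beta (y l) = alpha (y i) by rewrite yil alpha_beta_bar bar_inv.
have Pi : Pseg y 0 i = Pseg y 0 i.-1 * rr (y i) by apply: Pi_S.
rewrite ha -Pil2.
have Pnz : Pseg y 0 i.-1 != 0 by apply: Pseg_nz.
have bnz : (beta (y i))%:~R != 0 :> rat by rewrite intr_eq0 beta_nz.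
have anz : (alpha (y i))%:~R != 0 :> rat by rewrite intr_eq0 alpha_nz.
move: hz; rewrite -Pil Pi /rr => hz.
have -> : Xs y k i / Pseg y 0 i.-1 - Xs y k l / Pseg y 0 i.-1 =
  - ((Xs y k l / (Pseg y 0 i.-1 * ((alpha (y i))%:~R / (beta (y i))%:~R)) -
   Xs y k i / (Pseg y 0 i.-1 * ((alpha (y i))%:~R / (beta (y i))%:~R)))
   * ((alpha (y i))%:~R / (beta (y i))%:~R)) by field; apply/and3P.
rewrite hz rmorphM /=; field; exact: bnz.
Qed.
Lemma Mtrans3 (G : GBS) (D : {pred E G}) (y : nat -> E G)
  (k : nat -> int) a b c d : (0 < c)%N ->
  Mrel D y k a b -> Mrel D y k b c -> Mrel D y k c d -> Mrel D y k a d.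
Proof.
move=> c0 [yab Rab Rab2 [Pab Pab2] hab] [ybc Rbc Rbc2 [Pbc Pbc2] [z hz]]
  [ycd Rcd Rcd2 [Pcd Pcd2] hcd].
have yac : y a = y c by rewrite yab ybc bar_inv.
split.
- by rewrite yac.
- by rewrite Rab Rbc2 Rcd.
- by rewrite Rab2 Rbc Rcd2.
- by split; [rewrite Pab Pbc2 Pcd | rewrite Pab2 Pbc Pcd2].
have -> : Xs y k d / Pseg y 0 d.-1 - Xs y k a / Pseg y 0 a =
  (Xs y k d / Pseg y 0 d.-1 - Xs y k c / Pseg y 0 c) +
  (Xs y k c / Pseg y 0 c - Xs y k b / Pseg y 0 b.-1) +
  (Xs y k b / Pseg y 0 b.-1 - Xs y k a / Pseg y 0 a) by ring.
rewrite yac; apply: multZ_add; [apply: multZ_add; [exact: hcd|] | by rewrite -yac].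
exists z.
have Pc : Pseg y 0 c = Pseg y 0 c.-1 * rr (y c) by apply: Pi_S.
have hb : beta (y b) = alpha (y c) by rewrite ybc alpha_beta_bar.
move: hz; rewrite Pbc hb => hz.
rewrite Pbc2 Pc.
have Pnz : Pseg y 0 c.-1 != 0 by apply: Pseg_nz.
have bnz : (beta (y c))%:~R != 0 :> rat by rewrite intr_eq0 beta_nz.
have anz : (alpha (y c))%:~R != 0 :> rat by rewrite intr_eq0 alpha_nz.
have -> : Xs y k c / (Pseg y 0 c.-1 * rr (y c)) - Xs y k b / (Pseg y 0 c.-1 * rr (y c))
  = (Xs y k c / Pseg y 0 c.-1 - Xs y k b / Pseg y 0 c.-1) / rr (y c).
  by rewrite /rr; field; apply/and3P.
rewrite hz /rr !rmorphM /=; field; exact/andP.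
Qed.

Lemma simC_M (G : GBS) (D : {pred E G}) (hD : orientation D) (y : nat -> E G)
  (k : nat -> int) i l : (0 < i)%N -> (0 < l)%N ->
  simC D y k i l <-> Mrel D y k i l.
Proof.
move=> i0 l0; split.
- move=> [yil [[il [r q]]|[li [r q]]]]; first exact: lemA.
  apply: Msym => //; apply: lemA => //; by rewrite yil bar_inv.
- move=> M; case: (ltngtP i l) => [il|li|eil].
  + by case: (lemB i0 il M) => a b c; split => //; left.
  + have M' := Msym i0 l0 M.
    case: (lemB l0 li M') => a b c; split; first by case: M.
    by right.
  + case: M => h; move: (bar_nofix (y l)); by rewrite -h eil eqxx.
Qed.

Theorem lemma3p5 (G : GBS) (D : {pred E G}) (hD : orientation D)
    (n : nat) (a : nat -> V G) (y : nat -> E G) (k : nat -> int)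
    (hf : factorization n a y) :
  (forall i, (1 <= i <= n)%N -> approxC D n y k i i) /\
  (forall i j, (1 <= i <= n)%N -> (1 <= j <= n)%N ->
     approxC D n y k i j -> approxC D n y k j i) /\
  (forall i j l, (1 <= i <= n)%N -> (1 <= j <= n)%N -> (1 <= l <= n)%N ->
     approxC D n y k i j -> approxC D n y k j l -> approxC D n y k i l).
Proof.
split; first by move=> i _; left.
split.
- move=> i j /andP [i0 _] /andP [j0 _] [->|[l [/andP [l0 ln] [h1 h2]]]]; first by left.
  right; exists l; split; first by rewrite l0.
  move: h1 h2; rewrite !(simC_M hD) // => h1 h2.
  by split; apply: Msym.
- move=> i j p /andP [i0 _] /andP [j0 _] /andP [p0 _] [->//|[l [/andP [l0 ln] [h1 h2]]]].
  case=> [<-|[m [/andP [m0 mn] [h3 h4]]]]; first by right; exists l; rewrite l0.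
  right; exists m; split; first by rewrite m0.
  split => //.
  move: h1 h2 h3; rewrite !(simC_M hD) // => h1 h2 h3.
  exact: Mtrans3 h1 h2 h3.
Qed.
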